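(* Let $\varphi,\psi$ be Denjoy counterexamples with rotation numbers $\alpha,\beta$ such that $1,\alpha,\beta$ are rationally independent, and with Cantor minimal sets $\mathcal{Q}_1,\mathcal{Q}_2\subset\mathbb{T}^1$ respectively. Suppose $x_0\in\mathcal{Q}_{1,\mathrm{irr}}$, $y_0\in\mathcal{Q}_{2,\mathrm{irr}}$, closed intervals $J_1,J_2$ with endpoints in $\mathcal{Q}_{1,\mathrm{irr}}$, $\mathcal{Q}_{2,\mathrm{irr}}$ and midpoints $x_0,y_0$, and constants $C_1,C_2>0$ are such that every component $I$ of $\mathbb{T}^1\setminus\mathcal{Q}_1$ contained in $J_1$ satisfies $|I|\le C_1 d(x_0,x_I)^2$ and every component $I$ of $\mathbb{T}^1\setminus\mathcal{Q}_2$ contained in $J_2$ satisfies $|I|\le C_2 d(y_0,y_I)^2$ ($x_I,y_I$ midpoints). Let $f=\varphi\times\psi:\mathbb{T}^2\to\mathbb{T}^2$ and $z_0=(x_0,y_0)$. Then every open circular sector in $\mathbb{T}^2$ with vertex $z_0$, any radius $r>0$ (small enough that the sector is embedded), and opening angle in $(0,\pi)$ intersects $(\mathcal{Q}_{1,\mathrm{irr}}\times\mathcal{Q}_{2,\mathrm{irr}})\setminus\mathcal{O}_f(z_0)$.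
   Context: $\mathbb{T}^1=\mathbb{R}/\mathbb{Z}$ with metric $d$, $|I|$ the length of an interval; $\mathbb{T}^2=\mathbb{T}^1\times\mathbb{T}^1$. A Denjoy counterexample is an orientation-preserving circle homeomorphism with irrational rotation number that is not transitive; its unique minimal set is a Cantor set. For a Cantor set $\mathcal{Q}\subset\mathbb{T}^1$, $\mathcal{Q}_{\mathrm{irr}}$ is $\mathcal{Q}$ minus the endpoints of the components of $\mathbb{T}^1\setminus\mathcal{Q}$. $\mathcal{O}_f(z_0)=\{f^n(z_0):n\in\mathbb{Z}\}$. (Note $\mathcal{Q}_{1,\mathrm{irr}}\times\mathcal{Q}_{2,\mathrm{irr}}$ is the regular set of the semi-conjugacy of $f$ to the translation by $(\alpha,\beta)$.) *)

(* Defs.v *)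
(* classical reals. The circle T^1 = R/Z is modelled through
   lifts: points of T^1 are reals taken modulo 1, subsets of T^1 are
   1-periodic predicates on R, circle maps are given by their lifts. *)
From Stdlib Require Import Reals ZArith.
Open Scope R_scope.

Definition cong1 (a b : R) : Prop := exists k : Z, a = b + IZR k.

Definition dT1 (x y : R) : R :=
  Rmin (frac_part (x - y)) (1 - frac_part (x - y)).

Definition circle_homeo_lift (F : R -> R) : Prop :=
  continuity F /\ (forall x y, x < y -> F x < F y) /\
  (forall x, F (x + 1) = F x + 1).

Definition rot_number (F : R -> R) (a : R) : Prop :=
  forall x, Un_cv (fun n => (Nat.iter n F x - x) / INR n) a.

(* q lies on the full (Z-indexed) orbit of x, modulo 1 *)
Definition in_orbit1 (F : R -> R) (x q : R) : Prop :=
  exists n : nat, cong1 q (Nat.iter n F x) \/ cong1 (Nat.iter n F q) x.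

Definition transitive1 (F : R -> R) : Prop :=
  exists x, forall y eps, 0 < eps -> exists q, in_orbit1 F x q /\ dT1 q y < eps.

Definition irrational (a : R) : Prop :=
  forall p q : Z, q <> 0%Z -> a <> IZR p / IZR q.

Definition denjoy (F : R -> R) : Prop :=
  circle_homeo_lift F /\ (exists a, rot_number F a /\ irrational a) /\
  ~ transitive1 F.

Definition periodic1 (Q : R -> Prop) : Prop := forall x, Q x <-> Q (x + 1).

Definition invariant1 (F : R -> R) (Q : R -> Prop) : Prop :=
  forall x, Q x <-> Q (F x).

Definition minimal_set (F : R -> R) (Q : R -> Prop) : Prop :=
  periodic1 Q /\ closed_set Q /\ (exists x, Q x) /\ invariant1 F Q /\
  forall P : R -> Prop, periodic1 P -> closed_set P -> (exists x, P x) ->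
    invariant1 F P -> (forall x, P x -> Q x) -> forall x, Q x -> P x.

(* (a,b) is (a lift of) a component of T^1 \ Q *)
Definition gap (Q : R -> Prop) (a b : R) : Prop :=
  a < b /\ Q a /\ Q b /\ forall x, a < x < b -> ~ Q x.

Definition Qirr (Q : R -> Prop) (x : R) : Prop :=
  Q x /\ ~ (exists a b, gap Q a b /\ (x = a \/ x = b)).

(* integer-indexed orbit of z0 = (x0,y0) under f = phi x psi on T^2 *)
Definition in_orbit2 (phi psi : R -> R) (x0 y0 u v : R) : Prop :=
  exists n : nat,
    (cong1 u (Nat.iter n phi x0) /\ cong1 v (Nat.iter n psi y0)) \/
    (cong1 (Nat.iter n phi u) x0 /\ cong1 (Nat.iter n psi v) y0).

(* open circular sector in the lift R^2 with vertex (x0,y0), radius r,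
   initial direction t0 and opening angle th *)
Definition in_sector (x0 y0 r t0 th : R) (p : R * R) : Prop :=
  exists rho t, 0 < rho < r /\ t0 < t < t0 + th /\
    p = (x0 + rho * cos t, y0 + rho * sin t).

Definition sector_embedded (x0 y0 r t0 th : R) : Prop :=
  forall p q, in_sector x0 y0 r t0 th p -> in_sector x0 y0 r t0 th q ->
    cong1 (fst p) (fst q) -> cong1 (snd p) (snd q) -> p = q.

(* Main.v *)
Require Import Defs.
From Stdlib Require Import Reals ZArith Lra Lia Classical.
Open Scope R_scope.

Lemma cong1_refl x : cong1 x x.
Proof. exists 0%Z. simpl. ring. Qed.
Lemma cong1_sym x y : cong1 x y -> cong1 y x.
Proof. intros [k Hk]. exists (- k)%Z. rewrite opp_IZR. lra. Qed.
Lemma cong1_trans x y z : cong1 x y -> cong1 y z -> cong1 x z.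
Proof. intros [k Hk] [l Hl]. exists (l + k)%Z. rewrite plus_IZR. lra. Qed.

Lemma Z_cases (k : Z) : (exists n, IZR k = INR n) \/ (exists n, IZR k = - INR n).
Proof.
  destruct (Z_le_gt_dec 0 k).
  - left. exists (Z.to_nat k). rewrite INR_IZR_INZ, Z2Nat.id; auto.
  - right. exists (Z.to_nat (- k)). rewrite INR_IZR_INZ, Z2Nat.id by lia.
    rewrite opp_IZR. ring.
Qed.

Lemma per_shift (P : R -> Prop) : (forall x, P x <-> P (x + 1)) ->
  forall k x, P x <-> P (x + IZR k).
Proof.
  intros H.
  assert (Hn : forall n x, P x <-> P (x + INR n)).
  { induction n; intros x.
    - simpl. rewrite Rplus_0_r. tauto.
    - rewrite S_INR. replace (x + (INR n + 1)) with ((x + INR n) + 1) by ring.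
      rewrite <- H. apply IHn. }
  intros k x. destruct (Z_cases k) as [[n Hn'] | [n Hn']]; rewrite Hn'.
  - apply Hn.
  - rewrite (Hn n (x + - INR n)). replace (x + - INR n + INR n) with x by ring. tauto.
Qed.

Lemma F_shift (F : R -> R) : (forall x, F (x + 1) = F x + 1) ->
  forall k x, F (x + IZR k) = F x + IZR k.
Proof.
  intros H.
  assert (Hn : forall n x, F (x + INR n) = F x + INR n).
  { induction n; intros x.
    - simpl. rewrite !Rplus_0_r. auto.
    - rewrite S_INR. replace (x + (INR n + 1)) with ((x + INR n) + 1) by ring.
      rewrite H, IHn. ring. }
  intros k x. destruct (Z_cases k) as [[n Hn'] | [n Hn']]; rewrite Hn'.
  - apply Hn.
  - pose proof (Hn n (x + - INR n)) as E.
    replace (x + - INR n + INR n) with x in E by ring. lra.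
Qed.

Lemma iter_shift F : (forall x, F (x + 1) = F x + 1) ->
  forall n k x, Nat.iter n F (x + IZR k) = Nat.iter n F x + IZR k.
Proof.
  intros H n; induction n; intros k x; simpl; auto.
  rewrite IHn. apply F_shift; auto.
Qed.

Lemma iter_mono F : (forall x y, x < y -> F x < F y) ->
  forall n x y, x < y -> Nat.iter n F x < Nat.iter n F y.
Proof. intros H n; induction n; intros; simpl; auto. Qed.

Lemma iter_le F : (forall x y, x < y -> F x < F y) ->
  forall n x y, Nat.iter n F x <= Nat.iter n F y -> x <= y.
Proof.
  intros H n x y Hle. destruct (Rle_lt_dec x y); auto.
  pose proof (iter_mono F H n y x r). lra.
Qed.

Lemma iter_inj F : (forall x y, x < y -> F x < F y) ->
  forall n x y, Nat.iter n F x = Nat.iter n F y -> x = y.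
Proof.
  intros H n x y E. apply Rle_antisym; eapply iter_le; eauto; rewrite E; lra.
Qed.

Lemma cong1_iter F : (forall x, F (x + 1) = F x + 1) ->
  forall n a b, cong1 a b -> cong1 (Nat.iter n F a) (Nat.iter n F b).
Proof.
  intros H n a b [k Hk]. exists k. subst. apply iter_shift; auto.
Qed.

Lemma cong1_iter_inv F : (forall x, F (x + 1) = F x + 1) ->
  (forall x y, x < y -> F x < F y) ->
  forall n a b, cong1 (Nat.iter n F a) (Nat.iter n F b) -> cong1 a b.
Proof.
  intros H Hm n a b [k Hk]. exists k. rewrite <- iter_shift in Hk; auto.
  eapply iter_inj; eauto.
Qed.

Lemma cont_eps f x : continuity_pt f x ->
  forall eps, 0 < eps -> exists d, 0 < d /\ forall y, Rabs (y - x) < d -> Rabs (f y - f x) < eps.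
Proof.
  intros H eps He. destruct (H eps He) as [d [Hd Hy]].
  exists d. split; auto. intros y Hyd.
  destruct (Req_dec x y) as [<-|Hne].
  - unfold Rminus. rewrite Rplus_opp_r, Rabs_R0. exact He.
  - apply (Hy y). split. split. exact I. exact Hne. exact Hyd.
Qed.

Lemma iter_mul F : (forall x, F (x + 1) = F x + 1) ->
  forall j y k, Nat.iter j F y = y + IZR k ->
  forall m, Nat.iter (m * j) F y = y + IZR (Z.of_nat m * k).
Proof.
  intros H j y k Hj m. induction m.
  - simpl. ring.
  - replace (S m * j)%nat with (j + m * j)%nat by lia.
    rewrite Nat.iter_add, IHm, iter_shift, Hj by auto.
    rewrite Nat2Z.inj_succ, Z.mul_succ_l, plus_IZR. ring.
Qed.

Lemma no_periodic F al : circle_homeo_lift F -> rot_number F al ->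
  (forall p q : Z, IZR p + IZR q * al = 0 -> q = 0%Z) ->
  forall y j, (1 <= j)%nat -> ~ cong1 (Nat.iter j F y) y.
Proof.
  intros [Hc [Hm Hp]] Hr Hind y j Hj [k Hk].
  assert (Hal : al = IZR k / INR j).
  { apply Rle_antisym; apply Rnot_lt_le; intro Hlt.
    - destruct (Hr y (al - IZR k / INR j)) as [N HN]; [lra|].
      specialize (HN (S N * j)%nat ltac:(nia)).
      rewrite (iter_mul F Hp j y k Hk (S N)) in HN.
      unfold R_dist in HN.
      replace ((y + IZR (Z.of_nat (S N) * k) - y) / INR (S N * j)) with (IZR k / INR j) in HN.
      2:{ rewrite mult_INR, mult_IZR, <- INR_IZR_INZ. field.
          split; apply not_0_INR; lia. }
      rewrite Rabs_left in HN; lra.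
    - destruct (Hr y (IZR k / INR j - al)) as [N HN]; [lra|].
      specialize (HN (S N * j)%nat ltac:(nia)).
      rewrite (iter_mul F Hp j y k Hk (S N)) in HN.
      unfold R_dist in HN.
      replace ((y + IZR (Z.of_nat (S N) * k) - y) / INR (S N * j)) with (IZR k / INR j) in HN.
      2:{ rewrite mult_INR, mult_IZR, <- INR_IZR_INZ. field.
          split; apply not_0_INR; lia. }
      rewrite Rabs_right in HN; lra. }
  assert (E : IZR k + IZR (- Z.of_nat j) * al = 0).
  { rewrite Hal, opp_IZR, <- INR_IZR_INZ. field. apply not_0_INR; lia. }
  apply Hind in E. lia.
Qed.

Lemma surj F : circle_homeo_lift F -> forall z, exists w, F w = z.
Proof.
  intros [Hc [Hm Hp]] z.
  set (n := Int_part (z - F 0)).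
  destruct (base_Int_part (z - F 0)) as [H1 H2]. fold n in H1, H2.
  assert (E1 : F (IZR n) = F 0 + IZR n).
  { rewrite <- (F_shift F Hp n 0). f_equal. ring. }
  assert (E2 : F (IZR n + 1) = F 0 + IZR n + 1).
  { rewrite Hp, E1. ring. }
  destruct (IVT_cor (fun w => F w - z) (IZR n) (IZR n + 1)) as [w [_ Hw]].
  - apply continuity_minus; auto. apply continuity_const. intros a b; auto.
  - lra.
  - rewrite E1, E2. assert (0 <= F 0 + IZR n + 1 - z) by lra. assert (F 0 + IZR n - z <= 0) by lra. nra.
  - exists w. lra.
Qed.

Lemma orb_base F x : in_orbit1 F x x.
Proof. exists 0%nat. left. apply cong1_refl. Qed.

Lemma orb_shift F x q k : circle_homeo_lift F -> in_orbit1 F x q -> in_orbit1 F x (q + IZR k).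
Proof.
  intros [Hc [Hm Hp]] [n [H|H]]; exists n.
  - left. eapply cong1_trans; [|exact H]. exists k. ring.
  - right. rewrite iter_shift by auto. eapply cong1_trans; [|exact H]. exists k. ring.
Qed.

Lemma orb_F F x q : circle_homeo_lift F -> in_orbit1 F x q -> in_orbit1 F x (F q).
Proof.
  intros [Hc [Hm Hp]] [n [H|H]].
  - exists (S n). left. apply (cong1_iter F Hp 1 _ _ H).
  - destruct n as [|m].
    + exists 1%nat. left. apply (cong1_iter F Hp 1 _ _ H).
    + exists m. right. rewrite <- Nat.iter_succ_r. exact H.
Qed.

Lemma orb_Finv F x w : circle_homeo_lift F -> in_orbit1 F x (F w) -> in_orbit1 F x w.
Proof.
  intros [Hc [Hm Hp]] [n [H|H]].
  - destruct n as [|m].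
    + exists 1%nat. right. exact H.
    + exists m. left. apply (cong1_iter_inv F Hp Hm 1). exact H.
  - exists (S n). right. rewrite Nat.iter_succ_r. exact H.
Qed.

Definition Pc F x0 y := forall eps, 0 < eps -> exists q, in_orbit1 F x0 q /\ Rabs (q - y) < eps.

Lemma closed_nbh Q : closed_set Q -> forall x, ~ Q x ->
  exists e, 0 < e /\ forall y, Rabs (y - x) < e -> ~ Q y.
Proof.
  intros H x Hx. destruct (H x Hx) as [[d Hd] Hi].
  exists d. split; [exact Hd|]. intros y Hy. apply Hi. exact Hy.
Qed.

Lemma nbh_closed Q : (forall x, ~ Q x ->
  exists e, 0 < e /\ forall y, Rabs (y - x) < e -> ~ Q y) -> closed_set Q.
Proof.
  intros H x Hx. destruct (H x Hx) as [e [He Hy]].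
  exists (mkposreal e He). intros y Hy'. apply Hy. exact Hy'.
Qed.

Lemma orb_in_Q F Q x0 : circle_homeo_lift F -> periodic1 Q -> invariant1 F Q -> Q x0 ->
  forall q, in_orbit1 F x0 q -> Q q.
Proof.
  intros HF HP HI H0 q [n [[k Hk]|[k Hk]]].
  - subst q. apply per_shift; auto.
    induction n; simpl; auto. apply (proj1 (HI _)); auto.
  - assert (Q (Nat.iter n F q)). { rewrite Hk. apply per_shift; auto. }
    clear Hk. revert q H. induction n; simpl; intros q H; auto.
    apply IHn. apply (proj2 (HI _)). exact H.
Qed.

Lemma orbit_dense F Q x0 : circle_homeo_lift F -> minimal_set F Q -> Q x0 ->
  forall y, Q y -> Pc F x0 y.
Proof.
  intros HF [HP [HC [_ [HI Hmin]]]] H0.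
  pose proof HF as [Hc [Hm Hp]].
  apply Hmin.
  - intros x; split; intros H e He; destruct (H e He) as [q [Hq Hd]].
    + exists (q + IZR 1). split. apply orb_shift; auto. simpl. 
      replace (q + 1 - (x + 1)) with (q - x) by ring. auto.
    + exists (q + IZR (-1)). split. apply orb_shift; auto. simpl.
      replace (q + -1 - x) with (q - (x + 1)) by ring. auto.
  - apply nbh_closed. intros x Hx.
    unfold Pc in Hx. apply not_all_ex_not in Hx as [e He].
    apply imply_to_and in He as [He Hn].
    exists (e/2). split. lra. intros y Hy HPy.
    destruct (HPy (e/2)) as [q [Hq Hd]]. lra.
    apply Hn. exists q. split; auto.
    replace (q - x) with ((q - y) + (y - x)) by ring.
    eapply Rle_lt_trans. apply Rabs_triang. lra.
  - exists x0. intros e He. exists x0. split. apply orb_base.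
    unfold Rminus. rewrite Rplus_opp_r, Rabs_R0. auto.
  - intros x; split; intros H e He.
    + destruct (cont_eps F x (Hc x) e He) as [d [Hd Hy]].
      destruct (H d Hd) as [q [Hq Hqd]].
      exists (F q). split. apply orb_F; auto. apply Hy; auto.
    + set (d := Rmin (F (x + e) - F x) (F x - F (x - e))).
      assert (Hd : 0 < d).
      { unfold d. apply Rmin_pos; [pose proof (Hm x (x+e)) | pose proof (Hm (x-e) x)]; lra. }
      destruct (H d Hd) as [q [Hq Hqd]].
      destruct (surj F HF q) as [w Hw]. subst q.
      exists w. split. apply orb_Finv; auto.
      assert (d <= F (x + e) - F x) by apply Rmin_l.
      assert (d <= F x - F (x - e)) by apply Rmin_r.
      apply Rabs_def2 in Hqd as [Ha Hb].
      assert (w < x + e).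
      { destruct (Rlt_le_dec w (x+e)); auto.
        destruct (Req_dec w (x+e)). subst; lra. pose proof (Hm (x+e) w); lra. }
      assert (x - e < w).
      { destruct (Rlt_le_dec (x-e) w); auto.
        destruct (Req_dec w (x-e)). subst; lra. pose proof (Hm w (x-e)); lra. }
      apply Rabs_def1; lra.
  - intros y Hy. destruct (classic (Q y)) as [|Hny]; auto.
    destruct (closed_nbh Q HC y Hny) as [e [He Hn]].
    destruct (Hy e He) as [q [Hq Hd]].
    exfalso. apply (Hn q). auto. apply (orb_in_Q F Q x0); auto.
Qed.

Lemma gap_shift Q a b k : periodic1 Q -> gap Q a b -> gap Q (a + IZR k) (b + IZR k).
Proof.
  intros HP [Hab [Ha [Hb Hn]]]. split; [lra|]. split; [apply per_shift; auto|].
  split; [apply per_shift; auto|]. intros x Hx HQ.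
  apply (Hn (x + IZR (-k))). rewrite opp_IZR. lra.
  apply per_shift; auto.
Qed.

Lemma Qirr_cong Q x y : periodic1 Q -> Qirr Q x -> cong1 y x -> Qirr Q y.
Proof.
  intros HP [HQ Hn] [k Hk]. subst y. split. apply per_shift; auto.
  intros [a [b [Hg He]]]. apply Hn. exists (a + IZR (-k)), (b + IZR (-k)).
  split. apply gap_shift; auto. rewrite opp_IZR. lra.
Qed.

Lemma invf F Q x : invariant1 F Q -> Q x -> Q (F x).
Proof. intros H; apply H. Qed.
Lemma invb F Q x : invariant1 F Q -> Q (F x) -> Q x.
Proof. intros H; apply H. Qed.

Lemma Qirr_F F Q x : circle_homeo_lift F -> invariant1 F Q -> Qirr Q x -> Qirr Q (F x).
Proof.
  intros HF HI [HQ Hn]. pose proof HF as [Hc [Hm Hp]].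
  split. { first [apply (invf F); auto | apply (invb F); auto]. }
  intros [a [b [[Hab [Ha [Hb Hg]]] He]]]. apply Hn.
  destruct He as [He|He].
  - destruct (surj F HF b) as [c Hc']. subst.
    exists x, c. split; auto. split.
    { destruct (Rlt_le_dec x c); auto. destruct (Req_dec x c). subst; lra.
      pose proof (Hm c x); lra. }
    split; auto. split. apply (invb F); auto.
    intros z Hz HQz. apply (Hg (F z)). split; apply Hm; tauto. apply (invf F); auto.
  - destruct (surj F HF a) as [c Hc']. subst.
    exists c, x. split; auto. split.
    { destruct (Rlt_le_dec c x); auto. destruct (Req_dec x c). subst; lra.
      pose proof (Hm x c); lra. }
    split. apply (invb F); auto. split; auto.
    intros z Hz HQz. apply (Hg (F z)). split; apply Hm; tauto. apply (invf F); auto.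
Qed.

Lemma Qirr_Finv F Q y : circle_homeo_lift F -> invariant1 F Q -> Qirr Q (F y) -> Qirr Q y.
Proof.
  intros HF HI [HQ Hn]. pose proof HF as [Hc [Hm Hp]].
  split. apply HI; auto.
  assert (Hmi : forall u v, F u < F v -> u < v).
  { intros u v H. destruct (Rlt_le_dec u v); auto. destruct (Req_dec u v). subst; lra.
    pose proof (Hm v u); lra. }
  intros [a [b [[Hab [Ha [Hb Hg]]] He]]]. apply Hn.
  exists (F a), (F b). split.
  - split. apply Hm; auto. split. apply (invf F); auto. split. apply (invf F); auto.
    intros z Hz HQz. destruct (surj F HF z) as [w Hw]. subst z.
    apply (Hg w). split; apply Hmi; tauto. apply (invb F); auto.
  - destruct He; subst; auto.
Qed.

Lemma Qirr_orb F Q x0 : circle_homeo_lift F -> periodic1 Q -> invariant1 F Q ->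
  Qirr Q x0 -> forall q, in_orbit1 F x0 q -> Qirr Q q.
Proof.
  intros HF HP HI H0 q [n [H|H]].
  - apply (Qirr_cong Q (Nat.iter n F x0) q HP); auto. clear H. induction n; simpl; auto. apply Qirr_F; auto.
  - assert (Qirr Q (Nat.iter n F q)). { apply (Qirr_cong Q x0 _ HP); auto. }
    clear H. revert q H1. induction n; simpl; intros q H; auto.
    apply IHn. eapply Qirr_Finv; eauto.
Qed.

Definition clsd (Q : R -> Prop) := forall x, ~ Q x ->
  exists e, 0 < e /\ forall y, Rabs (y - x) < e -> ~ Q y.

Lemma clsd_refl Q : clsd Q -> clsd (fun z => Q (- z)).
Proof.
  intros H x Hx. destruct (H (-x) Hx) as [e [He Hy]]. exists e. split; auto.
  intros y Hyx. apply Hy. replace (- y - - x) with (- (y - x)) by ring.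
  rewrite Rabs_Ropp. auto.
Qed.

Lemma sup_part Q lo m : clsd Q -> Q lo -> lo < m -> ~ Q m ->
  exists a, Q a /\ lo <= a < m /\ forall z, a < z <= m -> ~ Q z.
Proof.
  intros HC Hlo Hlm Hm.
  set (E := fun z => Q z /\ lo <= z <= m).
  destruct (completeness E) as [a [Hub Hl]].
  - exists m. intros z [_ Hz]. lra.
  - exists lo. split; auto. lra.
  - assert (lo <= a) by (apply Hub; split; auto; lra).
    assert (a <= m) by (apply Hl; intros z [_ Hz]; lra).
    assert (HQa : Q a).
    { apply NNPP. intro Hna. destruct (HC a Hna) as [e [He Hy]].
      assert (a <= a - e); [|lra].
      apply Hl. intros z Hz. destruct (Rle_lt_dec z (a - e)); auto.
      exfalso. assert (z <= a) by (apply Hub; auto). apply (Hy z). apply Rabs_def1; lra.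
      apply Hz. }
    exists a. split; auto. split. split; auto. destruct (Req_dec a m); subst; auto; try lra.
    contradiction. 
    intros z Hz HQz. assert (z <= a) by (apply Hub; split; auto; lra). lra.
Qed.

Lemma inf_part Q hi m : clsd Q -> Q hi -> m < hi -> ~ Q m ->
  exists b, Q b /\ m < b <= hi /\ forall z, m <= z < b -> ~ Q z.
Proof.
  intros HC Hhi Hmh Hm.
  destruct (sup_part (fun z => Q (- z)) (- hi) (- m)) as [a [Ha [Hr Hz]]].
  - apply clsd_refl; auto.
  - rewrite Ropp_involutive; auto.
  - lra.
  - rewrite Ropp_involutive; auto.
  - exists (- a). split; auto. split. lra.
    intros z Hz' HQ. apply (Hz (- z)). lra. rewrite Ropp_involutive; auto.
Qed.

Lemma gap_of Q lo hi m : clsd Q -> Q lo -> Q hi -> lo < m < hi -> ~ Q m ->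
  exists a b, gap Q a b /\ lo <= a /\ a < m < b /\ b <= hi.
Proof.
  intros HC Hlo Hhi Hm HQm.
  destruct (sup_part Q lo m) as [a [Ha [Ha1 Ha2]]]; auto; try lra.
  destruct (inf_part Q hi m) as [b [Hb [Hb1 Hb2]]]; auto; try lra.
  exists a, b. split; [|lra]. split; [lra|]. split; auto. split; auto.
  intros x Hx. destruct (Rle_lt_dec x m). apply Ha2; lra. apply Hb2; lra.
Qed.

Lemma acc_right Q w e : clsd Q -> periodic1 Q -> Qirr Q w -> 0 < e < 1 ->
  exists q, Q q /\ w < q < w + e.
Proof.
  intros HC HP [Hw Hn] He. apply NNPP. intro Hno.
  destruct (classic (Q (w + e/2))) as [Hq|Hq].
  { apply Hno. exists (w + e/2). split; auto. lra. }
  destruct (gap_of Q w (w+1) (w + e/2)) as [a [b [Hg [H1 [H2 H3]]]]]; auto.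
  - apply (proj1 (HP w)); auto.
  - lra.
  - apply Hn. exists a, b. split; auto. left.
    destruct (Req_dec w a); auto. exfalso. apply Hno. exists a.
    destruct Hg as [_ [Ha _]]. split; auto. lra.
Qed.

Lemma acc_left Q w e : clsd Q -> periodic1 Q -> Qirr Q w -> 0 < e < 1 ->
  exists q, Q q /\ w - e < q < w.
Proof.
  intros HC HP [Hw Hn] He. apply NNPP. intro Hno.
  destruct (classic (Q (w - e/2))) as [Hq|Hq].
  { apply Hno. exists (w - e/2). split; auto. lra. }
  destruct (gap_of Q (w - 1) w (w - e/2)) as [a [b [Hg [H1 [H2 H3]]]]]; auto.
  - apply (proj2 (HP (w-1))). replace (w - 1 + 1) with w by ring. auto.
  - lra.
  - apply Hn. exists a, b. split; auto. right.
    destruct (Req_dec w b); auto. exfalso. apply Hno. exists b.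
    destruct Hg as [_ [_ [Hb _]]]. split; auto. lra.
Qed.

Lemma quad_bound C L D : 0 < C -> 0 < L -> C * L <= 1 -> 0 <= D ->
  L <= C * (D + L/2)^2 -> L <= 4 * C * D^2.
Proof.
  intros HC HL HCL HD H.
  assert (0 <= (D - L/2)^2) by apply pow2_ge_0.
  assert ((D + L/2)^2 <= 2 * D^2 + L^2/2) by (simpl in *; nra).
  assert (C * L^2 <= L).
  { assert (C*L*L <= 1*L) by (apply Rmult_le_compat_r; lra). simpl. lra. }
  nra.
Qed.

Lemma lemA_right Q x0 h C : clsd Q -> Q x0 -> ~ (exists b, gap Q x0 b) ->
  0 < h -> Q (x0 + h) -> 0 < C ->
  (forall a b, gap Q a b -> x0 - h <= a -> b <= x0 + h ->
     b - a <= C * ((a + b) / 2 - x0) ^ 2) ->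
  exists d, 0 < d /\ forall T, x0 < T < x0 + d ->
    exists q, Q q /\ Rabs (q - T) <= 4 * C * (T - x0) ^ 2.
Proof.
  intros HC H0 Hng Hh Hhi HCp Hest.
  assert (Hd : exists dR, 0 < dR /\ dR <= h /\
     forall a b, gap Q a b -> x0 < a < x0 + dR -> b - a <= 1 / C).
  { destruct (classic (exists a b, gap Q a b /\ x0 < a < x0 + Rmin h (1/C) /\ b - a > 1/C))
      as [[a1 [b1 [Hg1 [Ha1 HL1]]]] | Hno].
    - assert (Rmin h (1/C) <= h) by apply Rmin_l.
      assert (Rmin h (1/C) <= 1/C) by apply Rmin_r.
      exists (a1 - x0). split. lra. split. lra.
      intros a b [Hab [Ha [Hb Hg]]] Hax. apply Rnot_lt_le. intro HL.
      apply (Hg a1). lra. destruct Hg1 as [_ [Hq _]]. auto.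
    - assert (0 < Rmin h (1/C)). { apply Rmin_pos; auto. apply Rdiv_lt_0_compat; lra. }
      exists (Rmin h (1/C)). split; auto. split. apply Rmin_l.
      intros a b Hg Hax. apply Rnot_lt_le. intro HL. apply Hno. exists a, b.
      split; [auto|]. split; [auto|]. lra. }
  destruct Hd as [dR [HdR [HdRh HdRp]]].
  exists dR. split; auto. intros T HT.
  destruct (classic (Q T)) as [HQT|HQT].
  { exists T. split; auto. unfold Rminus at 1. rewrite Rplus_opp_r, Rabs_R0.
    assert (0 <= (T - x0)^2) by (apply pow2_ge_0). nra. }
  destruct (gap_of Q x0 (x0 + h) T) as [a [b [Hg [H1 [H2 H3]]]]]; auto. lra.
  assert (Hax : x0 <> a). { intro E. subst a. apply Hng. exists b. auto. }
  assert (HL : b - a <= 1 / C) by (apply (HdRp a b Hg); lra).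
  assert (Hest' := Hest a b Hg ltac:(lra) H3).
  exists a. split. destruct Hg as [_ [Ha _]]; auto.
  assert (b - a <= 4 * C * (T - x0) ^ 2).
  { apply (quad_bound C (b - a) (T - x0)); try lra.
    - replace 1 with (C * (1 / C)) by (field; lra).
      apply Rmult_le_compat_l; lra.
    - eapply Rle_trans. exact Hest'. apply Rmult_le_compat_l. lra.
      apply pow_incr. lra. }
  rewrite Rabs_left by lra. lra.
Qed.

Lemma gap_refl Q a b : gap (fun z => Q (- z)) a b -> gap Q (- b) (- a).
Proof.
  intros [Hab [Ha [Hb Hg]]]. split. lra. split; auto. split; auto.
  intros x Hx HQ. apply (Hg (- x)). lra. rewrite Ropp_involutive; auto.
Qed.

Lemma lemA Q x0 h C : clsd Q -> Qirr Q x0 ->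
  0 < h -> Q (x0 + h) -> Q (x0 - h) -> 0 < C ->
  (forall a b, gap Q a b -> x0 - h <= a -> b <= x0 + h ->
     b - a <= C * ((a + b) / 2 - x0) ^ 2) ->
  exists d, 0 < d /\ forall T, Rabs (T - x0) < d ->
    exists q, Q q /\ Rabs (q - T) <= 4 * C * (T - x0) ^ 2.
Proof.
  intros HC [H0 Hirr] Hh Hhi Hlo HCp Hest.
  destruct (lemA_right Q x0 h C) as [d1 [Hd1 H1]]; auto.
  { intros [b Hb]. apply Hirr. exists x0, b. auto. }
  destruct (lemA_right (fun z => Q (- z)) (- x0) h C) as [d2 [Hd2 H2]]; auto.
  - apply clsd_refl; auto.
  - rewrite Ropp_involutive; auto.
  - intros [b Hb]. apply gap_refl in Hb. rewrite Ropp_involutive in Hb.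
    apply Hirr. exists (- b), x0. auto.
  - replace (- (- x0 + h)) with (x0 - h) by ring. auto.
  - intros a b Hg Ha Hb. apply gap_refl in Hg.
    assert (E := Hest (- b) (- a) Hg ltac:(lra) ltac:(lra)).
    replace (((a + b) / 2 - - x0) ^ 2) with (((- b + - a) / 2 - x0) ^ 2) by field.
    lra.
  - exists (Rmin d1 d2). split. apply Rmin_pos; auto.
    intros T HT. apply Rabs_def2 in HT as [HTa HTb].
    assert (Rmin d1 d2 <= d1) by apply Rmin_l.
    assert (Rmin d1 d2 <= d2) by apply Rmin_r.
    destruct (Rtotal_order T x0) as [Hlt|[Heq|Hgt]].
    + destruct (H2 (- T)) as [q [Hq Hqd]]. lra.
      exists (- q). split; auto.
      replace (- q - T) with (- (q - - T)) by ring. rewrite Rabs_Ropp.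
      replace ((T - x0)^2) with ((- T - - x0)^2) by ring. auto.
    + subst T. exists x0. split; auto. unfold Rminus. rewrite Rplus_opp_r, Rabs_R0.
      simpl. lra.
    + apply H1. lra.
Qed.

Definition oidx F x (k : Z) q :=
  ((0 <= k)%Z /\ cong1 q (Nat.iter (Z.to_nat k) F x)) \/
  ((k <= 0)%Z /\ cong1 (Nat.iter (Z.to_nat (- k)) F q) x).

Definition noper F := forall y j, (1 <= j)%nat -> ~ cong1 (Nat.iter j F y) y.

Lemma iter_cong_eq F : noper F -> forall a b y,
  cong1 (Nat.iter a F y) (Nat.iter b F y) -> a = b.
Proof.
  intros HN.
  assert (H : forall a b y, (a < b)%nat -> ~ cong1 (Nat.iter a F y) (Nat.iter b F y)).
  { intros a b y Hab Hc. apply (HN (Nat.iter a F y) (b - a)%nat). lia.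
    rewrite <- Nat.iter_add. replace (b - a + a)%nat with b by lia.
    apply cong1_sym; auto. }
  intros a b y Hc. destruct (Nat.lt_total a b) as [Hl|[He|Hl]]; auto.
  - exfalso; eapply H; eauto.
  - exfalso; eapply H; eauto. apply cong1_sym; eauto.
Qed.

Lemma oidx_unique F x q k k' : circle_homeo_lift F -> noper F ->
  oidx F x k q -> oidx F x k' q -> k = k'.
Proof.
  intros [Hc [Hm Hp]] HN H1 H2.
  destruct H1 as [[Hk H1]|[Hk H1]]; destruct H2 as [[Hk' H2]|[Hk' H2]].
  - assert (E : Z.to_nat k = Z.to_nat k').
    { apply (iter_cong_eq F HN _ _ x). eapply cong1_trans. apply cong1_sym. exact H1. exact H2. }
    rewrite <- (Z2Nat.id k), <- (Z2Nat.id k'), E by lia. reflexivity.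
  - assert (E : (Z.to_nat (- k') + Z.to_nat k)%nat = 0%nat).
    { apply (iter_cong_eq F HN _ 0 x). simpl. rewrite Nat.iter_add.
      eapply cong1_trans; [|exact H2]. apply cong1_iter; auto. apply cong1_sym; auto. }
    assert (Z.to_nat k = 0%nat) by lia. assert (Z.to_nat (- k') = 0%nat) by lia.
    rewrite <- (Z2Nat.id k) by lia. rewrite <- (Z.opp_involutive k').
    rewrite <- (Z2Nat.id (- k')) by lia. rewrite H, H0. reflexivity.
  - assert (E : (Z.to_nat (- k) + Z.to_nat k')%nat = 0%nat).
    { apply (iter_cong_eq F HN _ 0 x). simpl. rewrite Nat.iter_add.
      eapply cong1_trans; [|exact H1]. apply cong1_iter; auto. apply cong1_sym; auto. }
    assert (Z.to_nat k' = 0%nat) by lia. assert (Z.to_nat (- k) = 0%nat) by lia.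
    rewrite <- (Z2Nat.id k') by lia. rewrite <- (Z.opp_involutive k).
    rewrite <- (Z2Nat.id (- k)) by lia. rewrite H, H0. reflexivity.
  - assert (E : Z.to_nat (- k) = Z.to_nat (- k')).
    { apply (iter_cong_eq F HN _ _ q). eapply cong1_trans. exact H1. apply cong1_sym. exact H2. }
    rewrite <- (Z.opp_involutive k), <- (Z.opp_involutive k').
    rewrite <- (Z2Nat.id (- k)), <- (Z2Nat.id (- k')), E by lia. reflexivity.
Qed.

Lemma oidx_same F x q q' k : circle_homeo_lift F ->
  oidx F x k q -> oidx F x k q' -> cong1 q q'.
Proof.
  intros [Hc [Hm Hp]] H1 H2.
  destruct H1 as [[Hk H1]|[Hk H1]]; destruct H2 as [[Hk' H2]|[Hk' H2]].
  - eapply cong1_trans. exact H1. apply cong1_sym. exact H2.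
  - assert (k = 0%Z) by lia. subst. simpl in *.
    eapply cong1_trans. exact H1. apply cong1_sym. exact H2.
  - assert (k = 0%Z) by lia. subst. simpl in *.
    eapply cong1_trans. exact H1. apply cong1_sym. exact H2.
  - apply (cong1_iter_inv F Hp Hm (Z.to_nat (- k))).
    eapply cong1_trans. exact H1. apply cong1_sym. exact H2.
Qed.

Lemma orb_oidx F x q : in_orbit1 F x q -> exists k, oidx F x k q.
Proof.
  intros [n [H|H]].
  - exists (Z.of_nat n). left. rewrite Nat2Z.id. split; auto. lia.
  - exists (- Z.of_nat n)%Z. right. rewrite Z.opp_involutive, Nat2Z.id. split; auto. lia.
Qed.

Lemma fwd_oidx F x q n : cong1 q (Nat.iter n F x) -> oidx F x (Z.of_nat n) q.
Proof. intros H. left. rewrite Nat2Z.id. split; auto. lia. Qed.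

Lemma bwd_oidx F x q n : cong1 (Nat.iter n F q) x -> oidx F x (- Z.of_nat n) q.
Proof. intros H. right. rewrite Z.opp_involutive, Nat2Z.id. split; auto. lia. Qed.

Lemma abs_le_inv x y : Rabs x <= y -> - y <= x <= y.
Proof. unfold Rabs. destruct (Rcase_abs x); lra. Qed.

Lemma sector_pt x0 y0 r t0 th rho E e1 e2 :
  0 < th < PI -> 0 < rho -> 0 <= E -> 4 * E <= rho ->
  4 * E < rho * tan (th / 2) -> rho + 4 * E < r ->
  Rabs e1 <= E -> Rabs e2 <= E ->
  in_sector x0 y0 r t0 th
    (x0 + (rho * cos (t0 + th/2) + e1), y0 + (rho * sin (t0 + th/2) + e2)).
Proof.
  intros Hth Hrho HE H4 Htan Hr He1 He2.
  set (t := t0 + th/2). set (c := cos t). set (s := sin t).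
  assert (Hcs : c * c + s * s = 1).
  { pose proof (sin2_cos2 t). unfold Rsqr in H. unfold c, s. lra. }
  assert (Hc1 : Rabs c <= 1) by (apply Rabs_le; apply COS_bound).
  assert (Hs1 : Rabs s <= 1) by (apply Rabs_le; apply SIN_bound).
  set (w1 := rho * c + e1). set (w2 := rho * s + e2).
  set (A := c * w1 + s * w2). set (B := - s * w1 + c * w2).
  assert (HA : A = rho + (c * e1 + s * e2)).
  { unfold A, w1, w2. replace rho with (rho * (c*c + s*s)) at 3 by (rewrite Hcs; ring). ring. }
  assert (HB : B = - s * e1 + c * e2) by (unfold B, w1, w2; ring).
  assert (Hce : Rabs (c * e1) <= E).
  { rewrite Rabs_mult. assert (0 <= Rabs e1) by apply Rabs_pos.
    assert (0 <= Rabs c) by apply Rabs_pos. nra. }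
  assert (Hse : Rabs (s * e2) <= E).
  { rewrite Rabs_mult. assert (0 <= Rabs e2) by apply Rabs_pos.
    assert (0 <= Rabs s) by apply Rabs_pos. nra. }
  assert (Hse1 : Rabs (- s * e1) <= E).
  { rewrite Rabs_mult, Rabs_Ropp. assert (0 <= Rabs e1) by apply Rabs_pos.
    assert (0 <= Rabs s) by apply Rabs_pos. nra. }
  assert (Hce2 : Rabs (c * e2) <= E).
  { rewrite Rabs_mult. assert (0 <= Rabs e2) by apply Rabs_pos.
    assert (0 <= Rabs c) by apply Rabs_pos. nra. }
  assert (HAb : Rabs (A - rho) <= 2 * E).
  { rewrite HA. replace (rho + (c * e1 + s * e2) - rho) with (c * e1 + s * e2) by ring.
    eapply Rle_trans. apply Rabs_triang. lra. }
  assert (HBb : Rabs B <= 2 * E).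
  { rewrite HB. eapply Rle_trans. apply Rabs_triang. lra. }
  apply abs_le_inv in HAb. apply abs_le_inv in HBb.
  assert (HApos : rho / 2 <= A) by lra.
  set (x := B / A).
  assert (HxA : x * A = B) by (unfold x; field; lra).
  set (k := 4 * E / rho).
  assert (Hk : k * rho = 4 * E) by (unfold k; field; lra).
  assert (Hk0 : 0 <= k) by (unfold k; apply Rmult_le_pos; [lra| left; apply Rinv_0_lt_compat; lra]).
  assert (Hx : - k <= x <= k).
  { split; apply Rnot_lt_le; intro Hc; nra. }
  assert (Hth2 : 0 < th / 2 < PI / 2) by lra.
  assert (Htp : 0 < tan (th / 2)) by (apply tan_gt_0; lra).
  assert (Hkt : k < tan (th / 2)).
  { apply (Rmult_lt_reg_r rho); auto. lra. }
  assert (Hxt : - tan (th/2) < x < tan (th/2)) by lra.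
  assert (Hd1 : atan x < th / 2).
  { rewrite <- (atan_tan (th/2)) by lra. apply atan_increasing.
    lra. }
  assert (Hd2 : - (th / 2) < atan x).
  { rewrite <- (atan_tan (th/2)) by lra. rewrite <- atan_opp. apply atan_increasing.
    lra. }
  set (S := sqrt (1 + x ^ 2)).
  assert (HS2 : S * S = 1 + x ^ 2).
  { unfold S. apply sqrt_sqrt. pose proof (pow2_ge_0 x). lra. }
  assert (HSp : 0 < S).
  { unfold S. apply sqrt_lt_R0. pose proof (pow2_ge_0 x). lra. }
  assert (Hcd : cos (atan x) = 1 / S) by (unfold S; rewrite cos_atan; unfold Rsqr; simpl; rewrite Rmult_1_r; reflexivity).
  assert (Hsd : sin (atan x) = x / S) by (unfold S; rewrite sin_atan; unfold Rsqr; simpl; rewrite Rmult_1_r; reflexivity).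
  set (rr := A * S).
  assert (Hrr2 : rr * rr = A * A + B * B).
  { unfold rr. replace (A * S * (A * S)) with (A * A * (S * S)) by ring.
    rewrite HS2. unfold x. field. lra. }
  assert (Hrrp : 0 < rr) by (unfold rr; nra).
  assert (Hrrb : rr <= A + Rabs B).
  { assert (0 <= Rabs B) by apply Rabs_pos.
    assert (B * B = Rabs B * Rabs B).
    { rewrite <- Rabs_mult. rewrite Rabs_right; auto. apply Rle_ge. nra. }
    nra. }
  exists rr, (t + atan x). split; [|split].
  - split; auto. apply Rabs_le in HBb. lra.
  - unfold t. lra.
  - rewrite cos_plus, sin_plus, Hcd, Hsd. fold c s.
    unfold rr. f_equal.
    + assert (E1 : c * A - s * B - w1 = w1 * (c*c + s*s - 1)) by (unfold A, B; ring).
      rewrite Hcs in E1.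
      replace (A * S * (c * (1 / S) - s * (x / S))) with (c * A - s * (x * A)) by (field; lra).
      rewrite HxA. fold w1. lra.
    + assert (E1 : s * A + c * B - w2 = w2 * (c*c + s*s - 1)) by (unfold A, B; ring).
      rewrite Hcs in E1.
      replace (A * S * (s * (1 / S) + c * (x / S))) with (s * A + c * (x * A)) by (field; lra).
      rewrite HxA. fold w2. lra.
Qed.

Lemma dT1_le x y : 0 <= dT1 x y <= Rabs (x - y).
Proof.
  unfold dT1, frac_part. set (z := x - y).
  destruct (base_Int_part z) as [H1 H2].
  split.
  - apply Rmin_glb; lra.
  - destruct (Rle_lt_dec 0 z).
    + assert (0 <= Int_part z)%Z. { apply le_IZR. apply Rnot_lt_le. intro Hc.
        assert (Int_part z < 0)%Z by (apply lt_IZR; auto).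
        assert (Int_part z <= -1)%Z by lia. apply IZR_le in H0. lra. }
      apply IZR_le in H. rewrite Rabs_right by lra.
      eapply Rle_trans. apply Rmin_l. simpl in H. lra.
    + assert (Int_part z <= -1)%Z. { assert (Int_part z < 0)%Z by (apply lt_IZR; lra). lia. }
      apply IZR_le in H. rewrite Rabs_left by lra.
      eapply Rle_trans. apply Rmin_r. lra.
Qed.

Lemma sq_abs x : Rabs x ^ 2 = x ^ 2.
Proof. unfold Rabs. destruct (Rcase_abs x); ring. Qed.

Lemma coord F Q x0 h C : circle_homeo_lift F -> minimal_set F Q -> Qirr Q x0 ->
  0 < h -> Qirr Q (x0 + h) -> Qirr Q (x0 - h) -> 0 < C ->
  (forall a b, gap Q a b -> x0 - h <= a -> b <= x0 + h ->
     b - a <= C * (dT1 x0 ((a + b) / 2)) ^ 2) ->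
  exists d, 0 < d /\ forall T rho, 0 < rho -> Rabs (T - x0) <= rho -> rho < d ->
    exists u, in_orbit1 F x0 u /\ Rabs (u - T) <= (4 * C + 1) * rho ^ 2.
Proof.
  intros HF HM H0 Hh Hhi Hlo HC Hest.
  pose proof HM as [HP [HCl [_ [HI _]]]].
  destruct (lemA Q x0 h C) as [d [Hd HA]]; auto.
  - intros x Hx. apply closed_nbh; auto.
  - destruct Hhi; auto.
  - destruct Hlo; auto.
  - intros a b Hg Ha Hb. eapply Rle_trans. apply Hest; auto.
    apply Rmult_le_compat_l. lra. destruct (dT1_le x0 ((a+b)/2)) as [D1 D2].
    replace (((a + b) / 2 - x0) ^ 2) with (Rabs (x0 - (a+b)/2) ^ 2).
    apply pow_incr. lra. rewrite sq_abs. ring.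
  - exists d. split; auto. intros T rho Hr HT Hrd.
    destruct (HA T) as [q [Hq Hqd]]. lra.
    destruct (orbit_dense F Q x0 HF HM (proj1 H0) q Hq (rho^2)) as [u [Hu Hud]].
    { apply pow_lt; auto. }
    exists u. split; auto.
    assert ((T - x0)^2 <= rho^2).
    { replace ((T - x0)^2) with (Rabs (T - x0) ^ 2).
      apply pow_incr. split; auto. apply Rabs_pos.
      apply sq_abs. }
    replace (u - T) with ((u - q) + (q - T)) by ring.
    eapply Rle_trans. apply Rabs_triang. nra.
Qed.

Lemma coord2 F Q x0 h C : circle_homeo_lift F -> minimal_set F Q -> Qirr Q x0 -> noper F ->
  0 < h -> Qirr Q (x0 + h) -> Qirr Q (x0 - h) -> 0 < C ->
  (forall a b, gap Q a b -> x0 - h <= a -> b <= x0 + h ->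
     b - a <= C * (dT1 x0 ((a + b) / 2)) ^ 2) ->
  exists d, 0 < d /\ forall T rho k, 0 < rho -> rho <= 1/2 -> Rabs (T - x0) <= rho -> rho < d ->
    exists v k', in_orbit1 F x0 v /\ oidx F x0 k' v /\ k' <> k /\
      Rabs (v - T) <= (4 * C + 3) * rho ^ 2.
Proof.
  intros HF HM H0 HN Hh Hhi Hlo HC Hest.
  pose proof HM as [HP [HCl [_ [HI _]]]].
  destruct (coord F Q x0 h C) as [d [Hd HA]]; auto.
  exists d. split; auto. intros T rho k Hr Hr2 HT Hrd.
  assert (Hr0 : 0 < rho ^ 2) by (apply pow_lt; auto).
  assert (Hr1 : rho ^ 2 <= 1/4) by (simpl; nra).
  destruct (HA T rho Hr HT Hrd) as [v1 [Hv1 Hv1d]].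
  destruct (orb_oidx F x0 v1 Hv1) as [m Hm].
  destruct (Z.eq_dec m k) as [Emk|Nmk].
  2:{ exists v1, m. split; auto. split; auto. split; auto. nra. }
  subst m.
  assert (Hirr : Qirr Q v1) by (apply (Qirr_orb F Q x0); auto).
  destruct (acc_right Q v1 (rho^2)) as [q [Hq Hqd]]; auto.
  { intros x Hx. apply closed_nbh; auto. }
  { lra. }
  destruct (orbit_dense F Q x0 HF HM (proj1 H0) q Hq (q - v1)) as [w [Hw Hwd]]. lra.
  apply Rabs_def2 in Hwd as [Hw1 Hw2].
  destruct (orb_oidx F x0 w Hw) as [m' Hm'].
  exists w, m'. split; auto. split; auto. split.
  - intro E. subst m'. destruct (oidx_same F x0 w v1 k HF Hm' Hm) as [z Hz].
    assert (0 < IZR z < 1) by lra.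
    destruct H as [Ha Hb]. apply lt_IZR in Ha. apply lt_IZR in Hb. lia.
  - replace (w - T) with ((w - v1) + (v1 - T)) by ring.
    eapply Rle_trans. apply Rabs_triang.
    assert (Rabs (w - v1) <= 2 * rho ^ 2) by (apply Rabs_le; lra). nra.
Qed.

Theorem lemma23 (phi psi : R -> R) (alpha beta : R) (Q1 Q2 : R -> Prop)
  (x0 y0 h1 h2 C1 C2 : R) :
  denjoy phi -> denjoy psi ->
  rot_number phi alpha -> rot_number psi beta ->
  (forall p q s : Z, IZR p + IZR q * alpha + IZR s * beta = 0 ->
     p = 0%Z /\ q = 0%Z /\ s = 0%Z) ->
  minimal_set phi Q1 -> minimal_set psi Q2 ->
  Qirr Q1 x0 -> Qirr Q2 y0 ->
  (* J1 = [x0 - h1, x0 + h1], J2 = [y0 - h2, y0 + h2] *)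
  0 < h1 < 1/2 -> 0 < h2 < 1/2 ->
  Qirr Q1 (x0 - h1) -> Qirr Q1 (x0 + h1) ->
  Qirr Q2 (y0 - h2) -> Qirr Q2 (y0 + h2) ->
  0 < C1 -> 0 < C2 ->
  (forall a b, gap Q1 a b -> x0 - h1 <= a -> b <= x0 + h1 ->
     b - a <= C1 * (dT1 x0 ((a + b) / 2)) ^ 2) ->
  (forall a b, gap Q2 a b -> y0 - h2 <= a -> b <= y0 + h2 ->
     b - a <= C2 * (dT1 y0 ((a + b) / 2)) ^ 2) ->
  forall r t0 th, 0 < r -> 0 < th < PI -> sector_embedded x0 y0 r t0 th ->
  exists p, in_sector x0 y0 r t0 th p /\
    Qirr Q1 (fst p) /\ Qirr Q2 (snd p) /\
    ~ in_orbit2 phi psi x0 y0 (fst p) (snd p).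
Proof.
  intros Dphi Dpsi Ra Rb Hind M1 M2 I1 I2 Hh1 Hh2 I1l I1h I2l I2h HC1 HC2 E1 E2
    r t0 th Hr Hth _.
  assert (HF1 : circle_homeo_lift phi) by apply Dphi.
  assert (HF2 : circle_homeo_lift psi) by apply Dpsi.
  assert (N1 : noper phi).
  { intros y j Hj. apply (no_periodic phi alpha HF1 Ra); auto.
    intros p q E. destruct (Hind p q 0%Z) as [_ [Hq _]]; auto. simpl. lra. }
  assert (N2 : noper psi).
  { intros y j Hj. apply (no_periodic psi beta HF2 Rb); auto.
    intros p q E. destruct (Hind p 0%Z q) as [_ [_ Hq]]; auto. simpl. lra. }
  destruct (coord phi Q1 x0 h1 C1) as [d1 [Hd1 Co1]]; auto; try lra.
  destruct (coord2 psi Q2 y0 h2 C2) as [d2 [Hd2 Co2]]; auto; try lra.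
  set (M := 4 * C1 + 4 * C2 + 3).
  assert (HM : 0 < M) by (unfold M; lra).
  assert (Hth2 : 0 < th / 2 < PI / 2) by lra.
  assert (Htp : 0 < tan (th / 2)) by (apply tan_gt_0; lra).
  set (rho := Rmin (Rmin (d1/2) (d2/2)) (Rmin (Rmin (1/2) (r/4)) (Rmin (1/(8*M)) (tan (th/2)/(8*M))))).
  assert (Hrho : 0 < rho).
  { unfold rho. repeat apply Rmin_pos; try lra; apply Rdiv_lt_0_compat; lra. }
  assert (B1 : rho <= d1/2).
  { unfold rho. eapply Rle_trans; apply Rmin_l. }
  assert (B2 : rho <= d2/2).
  { unfold rho. eapply Rle_trans. apply Rmin_l. apply Rmin_r. }
  assert (B3 : rho <= 1/2).
  { unfold rho. eapply Rle_trans. apply Rmin_r. eapply Rle_trans; apply Rmin_l. }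
  assert (B4 : rho <= r/4).
  { unfold rho. eapply Rle_trans. apply Rmin_r. eapply Rle_trans. apply Rmin_l. apply Rmin_r. }
  assert (B5 : rho <= 1/(8*M)).
  { unfold rho. eapply Rle_trans. apply Rmin_r. eapply Rle_trans. apply Rmin_r. apply Rmin_l. }
  assert (B6 : rho <= tan (th/2)/(8*M)).
  { unfold rho. eapply Rle_trans. apply Rmin_r. eapply Rle_trans; apply Rmin_r. }
  clearbody rho.
  set (t := t0 + th/2).
  set (T1 := x0 + rho * cos t). set (T2 := y0 + rho * sin t).
  assert (A1 : Rabs (T1 - x0) <= rho).
  { unfold T1. replace (x0 + rho * cos t - x0) with (rho * cos t) by ring.
    rewrite Rabs_mult, Rabs_right by lra. pose proof (COS_bound t).
    assert (Rabs (cos t) <= 1) by (apply Rabs_le; lra). nra. }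
  assert (A2 : Rabs (T2 - y0) <= rho).
  { unfold T2. replace (y0 + rho * sin t - y0) with (rho * sin t) by ring.
    rewrite Rabs_mult, Rabs_right by lra. pose proof (SIN_bound t).
    assert (Rabs (sin t) <= 1) by (apply Rabs_le; lra). nra. }
  destruct (Co1 T1 rho Hrho A1 ltac:(lra)) as [u [Hu Hud]].
  destruct (orb_oidx phi x0 u Hu) as [k Hk].
  destruct (Co2 T2 rho k Hrho B3 A2 ltac:(lra)) as [v [k' [Hv [Hk' [Hkk Hvd]]]]].
  assert (Hr2 : 0 <= rho ^ 2) by apply pow2_ge_0.
  assert (Hsec : in_sector x0 y0 r t0 th
    (x0 + (rho * cos (t0 + th/2) + (u - T1)), y0 + (rho * sin (t0 + th/2) + (v - T2)))).
  { apply (sector_pt x0 y0 r t0 th rho (M * rho ^ 2)); auto.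
    - apply Rmult_le_pos; lra.
    - assert (M * rho <= 1/8).
      { apply (Rmult_le_reg_r (/ M)). apply Rinv_0_lt_compat; lra.
        replace (M * rho * / M) with rho by (field; lra).
        replace (1/8 * / M) with (1 / (8 * M)) by (field; lra). lra. }
      simpl. nra.
    - assert (M * rho <= tan (th/2) / 8).
      { apply (Rmult_le_reg_r (/ M)). apply Rinv_0_lt_compat; lra.
        replace (M * rho * / M) with rho by (field; lra).
        replace (tan (th / 2) / 8 * / M) with (tan (th / 2) / (8 * M)) by (field; lra). lra. }
      simpl. nra.
    - assert (M * rho <= 1/8).
      { apply (Rmult_le_reg_r (/ M)). apply Rinv_0_lt_compat; lra.
        replace (M * rho * / M) with rho by (field; lra).
        replace (1/8 * / M) with (1 / (8 * M)) by (field; lra). lra. }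
      simpl. nra.
    - eapply Rle_trans. exact Hud. apply Rmult_le_compat_r; auto. unfold M; lra.
    - eapply Rle_trans. exact Hvd. apply Rmult_le_compat_r; auto. unfold M; lra. }
  replace (x0 + (rho * cos (t0 + th / 2) + (u - T1))) with u in Hsec by (unfold T1, t; ring).
  replace (y0 + (rho * sin (t0 + th / 2) + (v - T2))) with v in Hsec by (unfold T2, t; ring).
  exists (u, v). simpl. split; auto. split.
  { apply (Qirr_orb phi Q1 x0); auto; apply M1. }
  split.
  { apply (Qirr_orb psi Q2 y0); auto; apply M2. }
  intros [n [[Hu1 Hv1]|[Hu1 Hv1]]].
  - apply fwd_oidx in Hu1. apply fwd_oidx in Hv1.
    pose proof (oidx_unique phi x0 u _ _ HF1 N1 Hk Hu1).
    pose proof (oidx_unique psi y0 v _ _ HF2 N2 Hk' Hv1). congruence.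
  - apply bwd_oidx in Hu1. apply bwd_oidx in Hv1.
    pose proof (oidx_unique phi x0 u _ _ HF1 N1 Hk Hu1).
    pose proof (oidx_unique psi y0 v _ _ HF2 N2 Hk' Hv1). congruence.
Qed.
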